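(* Let $K\subseteq\mathbb R^2$ be a compact set containing no array on three points and let $\delta>0$. There exists $n_0\in\mathbb N$ such that for all $n\ge n_0$ the graphs $\Gamma^n_{\mathrm{hor}}$ and $\Gamma^n_{\mathrm{vert}}$ are disjoint (they have no common vertex).
   Context: An array on three points is a triple $a_1,a_2,a_3$ of points in the plane with $a_1\ne a_2$, $a_2\ne a_3$, such that the segments $[a_1;a_2]$ and $[a_2;a_3]$ are each parallel to a coordinate axis and are mutually orthogonal. Let $p(x,y)=x$, $q(x,y)=y$. For $n\in\mathbb N$ the graph $\Gamma^n$ has vertex set all lattice points $(i/2^n,j/2^n)$, $i,j\in\mathbb Z$, such that the square $[i/2^n;(i+1)/2^n)\times[j/2^n;(j+1)/2^n)$ meets $K$, and edges all two-element sets $\{u_1,u_2\}$ of vertices with $|p(u_1)-p(u_2)|\le 1/2^n$ or $|q(u_1)-q(u_2)|\le 1/2^n$. An edge $u_1u_2$ is vertical if $|p(u_1)-p(u_2)|\le 1/2^n$ and horizontal if $|q(u_1)-q(u_2)|\le 1/2^n$ (an edge may be both). It is long if the Euclidean distance $|u_1-u_2|\ge\delta$ and short if $|u_1-u_2|<\delta$. $\Gamma^n_{\mathrm{hor}}$ is the subgraph of $\Gamma^n$ formed by all long horizontal edges and their endpoints; $\Gamma^n_{\mathrm{vert}}$ is the subgraph formed by all long vertical edges and their endpoints. *)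

(* Defs.v *)
From HB Require Import structures.
From mathcomp Require Import all_boot all_order all_algebra.
From mathcomp Require Import all_classical all_reals topology normedtype.
Set Implicit Arguments. Unset Strict Implicit. Unset Printing Implicit Defensive.
Import Order.TTheory GRing.Theory Num.Theory.
Local Open Scope ring_scope.
Local Open Scope classical_set_scope.

Section Defs.
Variable R : realType.

Definition p (a : R * R) : R := a.1.
Definition q (a : R * R) : R := a.2.

Definition hor_seg (a b : R * R) : Prop := q a = q b.
Definition vert_seg (a b : R * R) : Prop := p a = p b.

Definition is_array3 (a1 a2 a3 : R * R) : Prop :=
  a1 <> a2 /\ a2 <> a3 /\
  ((hor_seg a1 a2 /\ vert_seg a2 a3) \/ (vert_seg a1 a2 /\ hor_seg a2 a3)).

Definition contains_no_array3 (K : set (R * R)) : Prop :=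
  ~ exists a1 a2 a3, K a1 /\ K a2 /\ K a3 /\ is_array3 a1 a2 a3.

Definition latpt (n : nat) (v : int * int) : R * R :=
  (v.1%:~R / 2%:R ^+ n, v.2%:~R / 2%:R ^+ n).

Definition gvertex (K : set (R * R)) (n : nat) (v : int * int) : Prop :=
  exists x, K x /\
    v.1%:~R / 2%:R ^+ n <= x.1 < (v.1 + 1)%:~R / 2%:R ^+ n /\
    v.2%:~R / 2%:R ^+ n <= x.2 < (v.2 + 1)%:~R / 2%:R ^+ n.

Definition edist (a b : R * R) : R :=
  Num.sqrt ((a.1 - b.1) ^+ 2 + (a.2 - b.2) ^+ 2).

Definition gedge (K : set (R * R)) (n : nat) (u1 u2 : int * int) : Prop :=
  gvertex K n u1 /\ gvertex K n u2 /\ u1 <> u2 /\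
  (`|p (latpt n u1) - p (latpt n u2)| <= 1 / 2%:R ^+ n \/
   `|q (latpt n u1) - q (latpt n u2)| <= 1 / 2%:R ^+ n).

Definition vertical_edge (n : nat) (u1 u2 : int * int) : Prop :=
  `|p (latpt n u1) - p (latpt n u2)| <= 1 / 2%:R ^+ n.
Definition horizontal_edge (n : nat) (u1 u2 : int * int) : Prop :=
  `|q (latpt n u1) - q (latpt n u2)| <= 1 / 2%:R ^+ n.
Definition long_edge (delta : R) (n : nat) (u1 u2 : int * int) : Prop :=
  delta <= edist (latpt n u1) (latpt n u2).

(* vertex sets of Gamma^n_hor and Gamma^n_vert: endpoints of long
   horizontal (resp. vertical) edges *)
Definition in_Gamma_hor (K : set (R * R)) (delta : R) (n : nat) (v : int * int) : Prop :=
  exists w, gedge K n v w /\ horizontal_edge n v w /\ long_edge delta n v w.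
Definition in_Gamma_vert (K : set (R * R)) (delta : R) (n : nat) (v : int * int) : Prop :=
  exists w, gedge K n v w /\ vertical_edge n v w /\ long_edge delta n v w.

End Defs.

(* Main.v *)
Require Import Defs.
From HB Require Import structures.
From mathcomp Require Import all_boot all_order all_algebra.
From mathcomp Require Import all_classical all_reals topology normedtype.
From mathcomp Require Import lra.
Import Order.TTheory GRing.Theory Num.Theory.
Import numFieldNormedType.Exports.
Local Open Scope ring_scope.
Local Open Scope classical_set_scope.

Definition Pt {R : realType} (d e : R) (t : (R*R)*((R*R)*(R*R))) : Prop :=
  `|t.1.2 - t.2.1.2| <= e /\ `|t.1.1 - t.2.2.1| <= e /\
  d <= `|t.1.1 - t.2.1.1| /\ d <= `|t.1.2 - t.2.2.2|.

Lemma gvertexE {R : realType} {K : set (R*R)} {n v} : gvertex K n v ->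
  exists x, K x /\ v.1%:~R / 2%:R ^+ n <= x.1 < v.1%:~R / 2%:R ^+ n + 1 / 2%:R ^+ n /\
    v.2%:~R / 2%:R ^+ n <= x.2 < v.2%:~R / 2%:R ^+ n + 1 / 2%:R ^+ n.
Proof.
move=> [x [Kx [h1 h2]]]; exists x; split => //.
by rewrite -!mulrDl -!(intrD _ _ 1).
Qed.

Lemma edist_le {R : realType} (a b : R * R) :
  Defs.edist a b <= `|a.1 - b.1| + `|a.2 - b.2|.
Proof.
rewrite /Defs.edist.
have -> : `|a.1 - b.1| + `|a.2 - b.2| = Num.sqrt ((`|a.1 - b.1| + `|a.2 - b.2|) ^+ 2).
  rewrite sqrtr_sqr; apply/esym/ger0_norm.
  by apply: addr_ge0; exact: normr_ge0.
apply: ler_wsqrtr.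
set x := a.1 - b.1; set y := a.2 - b.2.
have ex : x ^+ 2 = `|x| ^+ 2 by rewrite real_normK ?num_real.
have ey : y ^+ 2 = `|y| ^+ 2 by rewrite real_normK ?num_real.
rewrite ex ey sqrrD.
have : 0 <= `|x| * `|y| *+ 2 by rewrite mulrn_wge0 // mulr_ge0.
lra.
Qed.

Lemma core (R : realType) (K : set (R*R)) (dl e : R) n v : 0 < dl ->
  1 / 2%:R ^+ n <= e / 2 -> 1 / 2%:R ^+ n <= dl / 4 ->
  in_Gamma_hor K dl n v -> in_Gamma_vert K dl n v ->
  exists t, K t.1 /\ K t.2.1 /\ K t.2.2 /\ Pt (dl / 2) e t.
Proof.
move=> d0 he hd [w1 [[gv [gw1 _]] [hh hl]]] [w2 [[_ [gw2 _]] [vv vl]]].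
have [a [Ka [/andP[a1 a1'] /andP[a2 a2']]]] := gvertexE gv.
have [b [Kb [/andP[b1 b1'] /andP[b2 b2']]]] := gvertexE gw1.
have [c [Kc [/andP[c1 c1'] /andP[c2 c2']]]] := gvertexE gw2.
move: hh vv hl vl; rewrite /horizontal_edge /vertical_edge /long_edge /Defs.p /Defs.q /latpt /=.
move=> hh vv hl vl.
have hl' := le_trans hl (edist_le _ _).
have vl' := le_trans vl (edist_le _ _).
move: hl' vl'; rewrite /=.
set h := 1 / 2%:R ^+ n in he hd hh vv a1' a2' b1' b2' c1' c2' *.
set A1 := v.1%:~R / 2%:R ^+ n in a1 a1' hh vv *.
set A2 := v.2%:~R / 2%:R ^+ n in a2 a2' hh vv *.
set B1 := w1.1%:~R / 2%:R ^+ n in b1 b1' hh *.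
set B2 := w1.2%:~R / 2%:R ^+ n in b2 b2' hh *.
set C1 := w2.1%:~R / 2%:R ^+ n in c1 c1' vv *.
set C2 := w2.2%:~R / 2%:R ^+ n in c2 c2' vv *.
move=> hl' vl'.
exists (a, (b, c)); split => //; split => //; split => //=.
move: hh vv; rewrite !ler_norml => /andP[hh1 hh2] /andP[vv1 vv2].
split; first by rewrite ler_norml; apply/andP; split; lra.
split; first by rewrite ler_norml; apply/andP; split; lra.
have n2 : `|A2 - B2| <= h by rewrite ler_norml hh1 hh2.
have n1 : `|A1 - C1| <= h by rewrite ler_norml vv1 vv2.
have k1 : dl - h <= `|A1 - B1| by lra.
have k2 : dl - h <= `|A2 - C2| by lra.
split.
  move: k1; rewrite !ler_normr => /orP[] H; apply/orP; [left|right]; lra.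
move: k2; rewrite !ler_normr => /orP[] H; apply/orP; [left|right]; lra.
Qed.

Lemma limit_triple (R : realType) (K : set (R*R)) (d : R) : compact K -> 0 < d ->
  (forall e, 0 < e -> exists t, K t.1 /\ K t.2.1 /\ K t.2.2 /\ Pt d e t) ->
  exists a b c, K a /\ K b /\ K c /\ a.2 = b.2 /\ a.1 = c.1 /\ a.1 <> b.1 /\ a.2 <> c.2.
Proof.
move=> cK d0 H.
pose S e := [set t : (R*R)*((R*R)*(R*R)) | K t.1 /\ K t.2.1 /\ K t.2.2 /\ Pt d e t].
pose F := filter_from [set e : R | 0 < e] S.
have FF : ProperFilter F.
  apply: filter_from_proper; last first.
    by move=> e /= e0; have [t Ht] := H e e0; exists t.
  apply: filter_from_filter; first by exists 1 => /=.
  move=> i j /= i0 j0; exists (Num.min i j); first by rewrite /= lt_min i0.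
  move=> t [K1 [K2 [K3 [h1 [h2 [h3 h4]]]]]]; split.
    split; [done|split; [done|split; [done|]]].
    split; [apply: (le_trans h1); rewrite ge_min lexx //|split; [apply: (le_trans h2); rewrite ge_min lexx //|by []]].
  split; [done|split; [done|split; [done|]]].
  split; [apply: (le_trans h1); rewrite ge_min lexx orbT //|split; [apply: (le_trans h2); rewrite ge_min lexx orbT //|by []]].
have FK : F (K `*` (K `*` K)).
  exists 1; first by rewrite /=.
  by move=> t [K1 [K2 [K3 _]]].
have cK3 : compact (K `*` (K `*` K)) by apply: compact_setX => //; apply: compact_setX.
have [z [[Kz1 [Kz2 Kz3]] cz]] := cK3 F FF FK.
have near_t : forall r, 0 < r -> exists t, S r t /\
   `|z.1.1 - t.1.1| < r /\ `|z.1.2 - t.1.2| < r /\ `|z.2.1.1 - t.2.1.1| < r /\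
   `|z.2.1.2 - t.2.1.2| < r /\ `|z.2.2.1 - t.2.2.1| < r /\ `|z.2.2.2 - t.2.2.2| < r.
  move=> r r0.
  have [t [St Bt]] := cz (S r) (ball z r) (ex_intro2 _ _ r r0 (fun _ h => h)) (nbhsx_ballx z r r0).
  exists t; split => //.
  move: Bt; rewrite /ball /= => -[[b1 b2] [[b3 b4] [b5 b6]]].
  by do !split.
have zero : forall x : R, (forall r, 0 < r -> `|x| < r) -> x = 0.
  move=> x hx; apply/eqP; apply/negPn/negP => nx.
  have := hx `|x|; rewrite normr_gt0 ltxx; move=> /(_ nx); done.
exists z.1, z.2.1, z.2.2; split => //; split => //; split => //.
split.
  apply/eqP; rewrite -subr_eq0; apply/eqP; apply: zero => r r0.
  have r3 : 0 < r / 3 by rewrite divr_gt0.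
  have [t [[_ [_ [_ [h1 _]]]] [a1 [a2 [a3 [a4 [a5 a6]]]]]]] := near_t _ r3.
  move: h1 a2 a4; rewrite ltr_norml ler_norml !ltr_norml => /andP[? ?] /andP[? ?] /andP[? ?].
  lra.
split.
  apply/eqP; rewrite -subr_eq0; apply/eqP; apply: zero => r r0.
  have r3 : 0 < r / 3 by rewrite divr_gt0.
  have [t [[_ [_ [_ [_ [h1 _]]]]] [a1 [a2 [a3 [a4 [a5 a6]]]]]]] := near_t _ r3.
  move: h1 a1 a5; rewrite ltr_norml ler_norml !ltr_norml => /andP[? ?] /andP[? ?] /andP[? ?].
  lra.
have r3 : 0 < d / 4 by rewrite divr_gt0.
have [t [[_ [_ [_ [_ [_ [h1 h2]]]]]] [a1 [a2 [a3 [a4 [a5 a6]]]]]]] := near_t _ r3.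
split.
  move=> e; move: h1 a1 a3; rewrite e ler_normr !ltr_norml => /orP[] ? /andP[? ?] /andP[? ?]; lra.
move=> e; move: h2 a2 a6; rewrite e ler_normr !ltr_norml => /orP[] ? /andP[? ?] /andP[? ?]; lra.
Qed.

Lemma pow_small {R : realType} (m : R) : 0 < m -> exists N : nat,
  forall n, (N <= n)%N -> 1 / 2%:R ^+ n <= m.
Proof.
move=> m0.
exists (Num.truncn (1 / m)).+1 => n hn.
have s0 : (0 : R) < 2%:R ^+ n by rewrite exprn_gt0.
rewrite ler_pdivrMr //.
have h1 := truncnS_gt (1 / m).
have h2 : ((Num.truncn (1 / m)).+1%:R : R) <= 2%:R ^+ n.
  rewrite -natrX ler_nat.
  apply: leq_trans (ltnW (ltn_expl (Num.truncn (1 / m)).+1 (isT : (1 < 2)%N))) _.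
  by apply: leq_pexp2l.
have h3 : 1 / m < 2%:R ^+ n := lt_le_trans h1 h2.
move: h3; rewrite ltr_pdivrMr // => h3.
by rewrite mulrC ltW.
Qed.

Theorem mainTheorem3 (R : realType) (K : set (R * R)) (delta : R) :
  compact K -> contains_no_array3 K -> 0 < delta ->
  exists n0 : nat, forall n : nat, (n0 <= n)%N ->
    forall v : int * int, ~ (in_Gamma_hor K delta n v /\ in_Gamma_vert K delta n v).
Proof.
move=> cK noA d0.
apply: contrapT => nH.
have H : forall n0, exists n, (n0 <= n)%N /\ exists v, in_Gamma_hor K delta n v /\ in_Gamma_vert K delta n v.
  move=> n0; apply: contrapT => c; apply: nH; exists n0 => n hn v [h1 h2].
  by apply: c; exists n; split => //; exists v; split.
have d2 : 0 < delta / 2 by rewrite divr_gt0.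
have [a [b [c [Ka [Kb [Kc [e1 [e2 [n1 n2]]]]]]]]] : exists a b c, K a /\ K b /\ K c /\ a.2 = b.2 /\ a.1 = c.1 /\ a.1 <> b.1 /\ a.2 <> c.2.
  apply: (@limit_triple R K (delta / 2) cK d2) => e e0.
  have m0 : 0 < Num.min (e / 2) (delta / 4) by rewrite lt_min !divr_gt0.
  have [N HN] := pow_small _ m0.
  have [n [hn [v [hv1 hv2]]]] := H N.
  have hm := HN n hn.
  apply: (@core R K delta e n v d0 _ _ hv1 hv2).
    by apply: (le_trans hm); rewrite ge_min lexx.
  by apply: (le_trans hm); rewrite ge_min lexx orbT.
apply: noA; exists b, a, c; split => //; split => //; split => //.
split; first by move=> E; apply: n1; rewrite E.
split; first by move=> E; apply: n2; rewrite E.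
by left; split.
Qed.
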